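(* Let $A,B$ be disjoint sets of positive integers with $|A|=m\ge1$, $|B|=n\ge1$, let $\sigma=\sigma_1\cdots\sigma_m$ be a signed permutation of $A$ and $\pi=\pi_1\cdots\pi_n$ a signed permutation of $B$, and suppose $\sigma_m\prec\pi_n$. Let $\mathfrak S^{sb}(\sigma,\pi)$ be the set of shuffles $\alpha=\alpha_1\cdots\alpha_{n+m}$ of $\sigma$ and $\pi$ with $\alpha_{n+m}=\sigma_m$. Then $$\sum_{\alpha\in\mathfrak S^{sb}(\sigma,\pi)}q^{\mathrm{fmaj}(\alpha)}=q^{\mathrm{fmaj}(\sigma)+\mathrm{fmaj}(\pi)+2n}{n+m-1\brack n}_{q^2}.$$
   Context: A signed permutation of a finite set $A$ of positive integers is a word $w_1\cdots w_m$ of nonzero integers such that $|w_1|\cdots|w_m|$ is an arrangement of all elements of $A$. A shuffle of two words with disjoint sets of letters is a word containing both as subsequences and consisting of exactly their letters. Order $\prec$ on nonzero integers: $-1\prec-2\prec-3\prec\cdots$ (all negatives, $-a\prec-b$ iff $a<b$) $\prec1\prec2\prec3\prec\cdots$. For a word $w$ of distinct nonzero integers, $\mathrm{maj}_\prec(w)=\sum_{i:w_i\succ w_{i+1}}i$, $\mathrm{neg}(w)$ is the number of negative letters, and $\mathrm{fmaj}(w)=2\mathrm{maj}_\prec(w)+\mathrm{neg}(w)$. $[m]_x=1+x+\dots+x^{m-1}$, $[m]_x!=[1]_x\cdots[m]_x$, $[0]_x!=1$, ${N\brack K}_x=\frac{[N]_x!}{[K]_x![N-K]_x!}$. *)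

(* Defs.v *)
From mathcomp Require Import all_boot all_order all_algebra.
Set Implicit Arguments. Unset Strict Implicit. Unset Printing Implicit Defensive.
Import Order.TTheory GRing.Theory Num.Theory.
Local Open Scope ring_scope.

(* The order "prec" on nonzero integers:
   -1 < -2 < -3 < ... < 1 < 2 < 3 < ... *)
Definition prec (a b : int) : bool :=
  if a < 0 then (if b < 0 then b < a else true)
  else (if b < 0 then false else a < b).

(* maj_prec w = sum of the (1-based) positions i with w_i succ w_{i+1} *)
Definition maj_prec (w : seq int) : nat :=
  (\sum_(i < (size w).-1 | prec (nth (0:int) w i.+1) (nth (0:int) w i)) i.+1)%N.

Definition neg (w : seq int) : nat := count (fun x : int => x < 0) w.

Definition fmaj (w : seq int) : nat := (2 * maj_prec w + neg w)%N.

(* w is a signed permutation of the finite set A (given as a duplicate-free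
   list of positive integers) *)
Definition signed_perm (A : seq nat) (w : seq int) : Prop :=
  all (fun x : int => x != 0) w /\ perm_eq (map absz w) A.

Definition is_shuffle (s p a : seq int) : bool :=
  [&& subseq s a, subseq p a & perm_eq a (s ++ p)].

Definition qint (k : nat) (x : {poly rat}) : {poly rat} := \sum_(i < k) x ^+ i.
Definition qfact (k : nat) (x : {poly rat}) : {poly rat} :=
  \prod_(1 <= i < k.+1) qint i x.
Definition qbinom (N K : nat) (x : {poly rat}) : {poly rat} :=
  qfact N x %/ (qfact K x * qfact (N - K) x).

(* Main.v *)
Require Import Defs.
From mathcomp Require Import all_boot all_order all_algebra.
From mathcomp Require Import zify ring.
Import Order.TTheory GRing.Theory Num.Theory.
Local Open Scope ring_scope.


Fixpoint gb (t : {poly rat}) (N K : nat) : {poly rat} :=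
  match N, K with
  | _, 0%N => 1
  | 0%N, _.+1 => 0
  | N'.+1, K'.+1 => gb t N' K' + t ^+ K'.+1 * gb t N' K'.+1
  end.

Lemma gb_gt (t : {poly rat}) N K : (N < K)%N -> gb t N K = 0.
Proof.
elim: N K => [|N IH] [|K] //= H.
by rewrite !IH ?mulr0 ?addr0 //; lia.
Qed.

Lemma gb_nn (t : {poly rat}) N : gb t N N = 1.
Proof. by elim: N => //= N ->; rewrite gb_gt // mulr0 addr0. Qed.

Lemma qfactS (t : {poly rat}) k : qfact k.+1 t = qfact k t * qint k.+1 t.
Proof. by rewrite /qfact big_nat_recr. Qed.

Lemma qfact0 (t : {poly rat}) : qfact 0 t = 1.
Proof. by rewrite /qfact big_geq. Qed.

Lemma qintD (t : {poly rat}) a b : qint (a + b) t = qint a t + t ^+ a * qint b t.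
Proof.
rewrite /qint big_split_ord /= mulr_sumr; congr (_ + _).
by apply: eq_bigr => i _; rewrite exprD.
Qed.

Lemma gb_closed (t : {poly rat}) N K : (K <= N)%N -> gb t N K * (qfact K t * qfact (N - K) t) = qfact N t.
Proof.
elim: N K => [|N IH] [|K] //= HK.
- by rewrite qfact0 !mul1r.
- by rewrite qfact0 !mul1r subn0.
case: (ltngtP K N) => HKN; last 2 first.
- lia.
- subst K; rewrite gb_nn gb_gt // mulr0 addr0 mul1r subnn qfact0 mulr1.
  by [].
rewrite subSS.
have E1 := IH K (ltnW HKN).
have E2 := IH K.+1 HKN.
have HNK : (N - K = (N - K.+1).+1)%N by lia.
rewrite qfactS HNK qfactS -HNK.
have -> : qfact N.+1 t = qfact N t * qint N.+1 t by rewrite qfactS.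
have -> : qint N.+1 t = qint K.+1 t + t ^+ K.+1 * qint (N - K) t.
  by rewrite -qintD; congr qint; lia.
rewrite HNK mulrDr.
rewrite HNK qfactS in E1; rewrite qfactS in E2.
rewrite -{1}E1 -E2; ring.
Qed.


Definition tt : {poly rat} := 'X ^+ 2.

Lemma qint_neq0 k : (0 < k)%N -> qint k tt != 0.
Proof.
move=> Hk; apply/negP => /eqP H.
have : (qint k tt).[1] = k%:R.
  rewrite /qint horner_sum.
  under eq_bigr => i _ do rewrite /tt -exprM hornerXn expr1n.
  by rewrite sumr_const card_ord.
rewrite H horner0 => /esym/eqP; rewrite pnatr_eq0; lia.
Qed.

Lemma qfact_neq0 k : qfact k tt != 0.
Proof.
elim: k => [|k IH]; first by rewrite qfact0 oner_neq0.
by rewrite qfactS mulf_neq0 // qint_neq0.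
Qed.

Lemma gb_sym N K : (K <= N)%N -> gb tt N K = gb tt N (N - K).
Proof.
move=> HK.
have D : qfact K tt * qfact (N - K) tt != 0 by rewrite mulf_neq0 ?qfact_neq0.
apply: (mulIf D).
have E := @gb_closed tt N (N - K) (leq_subr K N); rewrite subKn // in E.
by rewrite gb_closed // -E [qfact K tt * _]mulrC.
Qed.

Lemma gb_pascal2 N K : (K < N)%N ->
  gb tt N.+1 K.+1 = gb tt N K.+1 + tt ^+ (N - K) * gb tt N K.
Proof.
move=> HK.
rewrite gb_sym; last by lia.
have -> : (N.+1 - K.+1 = (N - K.+1).+1)%N by lia.
rewrite /=.
have -> : ((N - K.+1).+1 = N - K)%N by lia.
by rewrite -(@gb_sym N K (ltnW HK)) -(@gb_sym N K.+1 HK).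
Qed.

Lemma qbinom_gb N K : (K <= N)%N -> qbinom N K tt = gb tt N K.
Proof.
move=> HK; rewrite /qbinom -(@gb_closed tt N K HK) mulpK //.
by rewrite mulf_neq0 ?qfact_neq0.
Qed.

Lemma prec_asym {a b} : prec a b -> ~~ prec b a.
Proof. rewrite /prec; repeat case: ifP; lia. Qed.

Lemma prec_total {a b} : a != b -> prec a b || prec b a.
Proof. rewrite /prec; repeat case: ifP; lia. Qed.

Lemma prec_trans {a b c} : prec a b -> prec b c -> prec a c.
Proof. rewrite /prec; repeat case: ifP; lia. Qed.

Fixpoint shuf (u v : seq int) : seq (seq int) :=
  match u with
  | [::] => [:: v]
  | x :: u' =>
    let fix sh v :=
      match v with
      | [::] => [:: u]
      | y :: v' => map (cons x) (shuf u' v) ++ map (cons y) (sh v')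
      end in sh v
  end.

Lemma shuf_nil_r u : shuf u [::] = [:: u].
Proof. by case: u. Qed.

Lemma shuf_cons x u y v : shuf (x :: u) (y :: v) =
  map (cons x) (shuf u (y :: v)) ++ map (cons y) (shuf (x :: u) v).
Proof. by []. Qed.

Lemma shuf_perm {u v b} : b \in shuf u v -> perm_eq b (u ++ v).
Proof.
elim: u v b => [|x u IHu] v b; first by rewrite inE => /eqP ->.
elim: v b => [|y v IHv] b; first by rewrite shuf_nil_r inE cats0 => /eqP ->.
rewrite shuf_cons mem_cat => /orP [] /mapP [c Hc ->].
- by rewrite /= perm_cons IHu.
- rewrite perm_sym -(cat1s y v) perm_catCA /= perm_cons perm_sym.
  exact: IHv.
Qed.

Lemma shuf_sym u v : perm_eq (shuf u v) (shuf v u).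
Proof.
elim: u v => [|x u IHu] v; first by rewrite shuf_nil_r.
elim: v => [|y v IHv]; first by rewrite shuf_nil_r.
rewrite !shuf_cons perm_catC; apply: perm_cat; apply: perm_map.
- exact: IHv.
- exact: IHu.
Qed.

Lemma shuf_uniq u v : uniq (u ++ v) -> uniq (shuf u v).
Proof.
elim: u v => [|x u IHu] v; first by [].
elim: v => [|y v IHv]; first by rewrite shuf_nil_r.
move=> H.
have Hxy : x != y.
  apply/eqP => Exy; move: H; rewrite Exy /= mem_cat inE eqxx orbT; by [].
rewrite shuf_cons cat_uniq !map_inj_uniq; try by move=> ? ? [].
apply/and3P; split.
- apply: IHu; by case/andP: H.
- apply/hasPn => z /mapP [c _ ->]; apply/mapP => [[d _ [E _]]].
  by move: Hxy; rewrite E eqxx.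
- apply: IHv; move: H; rewrite /= !mem_cat !inE !cat_uniq /=.
  case/and5P=> H1 -> H3 _ ->; rewrite andbT.
  by move: H1 H3; case: (x \in u); case: (x \in v); case: (y \in u); case: (x == y); case: has.
Qed.

Lemma shuf_subseq u v b : b \in shuf u v -> subseq u b && subseq v b.
Proof.
elim: u v b => [|x u IHu] v b; first by rewrite inE => /eqP ->; rewrite sub0seq subseq_refl.
elim: v b => [|y v IHv] b; first by rewrite shuf_nil_r inE => /eqP ->; rewrite sub0seq subseq_refl.
rewrite shuf_cons mem_cat => /orP [] /mapP [c Hc ->].
- case/andP: (IHu _ _ Hc) => H1 H2.
  by apply/andP; split; [rewrite /= eqxx | exact: subseq_trans H2 (subseq_cons _ _)].
- case/andP: (IHv _ Hc) => H1 H2.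
  by apply/andP; split; [exact: subseq_trans H1 (subseq_cons _ _) | rewrite /= eqxx].
Qed.

Lemma subseq_perm_eq {v b : seq int} : subseq v b -> perm_eq b v -> b = v.
Proof.
move=> Hs Hp; have := size_subseq_leqif Hs.
rewrite (perm_size Hp) => -[_]; rewrite eqxx => /esym/eqP ->.
by [].
Qed.

Lemma shuf_complete b u v : uniq (u ++ v) -> is_shuffle u v b -> b \in shuf u v.
Proof.
elim: b u v => [|z b IH] u v Hu /and3P [H1 H2 H3].
  by move: (perm_size H3); rewrite size_cat; case: u {H1 H3 Hu}; case: v {H2}.
case: u Hu H1 H3 => [|x u] Hu H1 H3.
  by rewrite (subseq_perm_eq H2 H3) inE.
case: v Hu H2 H3 => [|y v] Hu H2 H3.
  by rewrite cats0 in H3; rewrite (subseq_perm_eq H1 H3) shuf_nil_r inE.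
have Hxy : x != y.
  apply/eqP => Exy; move: Hu; rewrite Exy /= mem_cat inE eqxx orbT; by [].
have Hub : uniq (z :: b) by rewrite (perm_uniq H3).
rewrite shuf_cons mem_cat.
case: (eqVneq x z) => [Exz|Nxz].
  subst z; apply/orP; left; rewrite mem_map; last by move=> ? ? [].
  apply: IH; first by case/andP: Hu.
  move: H1 H2 H3; rewrite /= eqxx eq_sym (negbTE Hxy) perm_cons => A B C.
  by rewrite /is_shuffle A B C.
case: (eqVneq y z) => [Eyz|Nyz].
  subst z; apply/orP; right; rewrite mem_map; last by move=> ? ? [].
  apply: IH.
    move: Hu; rewrite -(cat1s y v) uniq_catCA /=; by case/andP.
  move: H1 H2 H3; rewrite /= eqxx (negbTE Nxz) => A B C.
  rewrite /is_shuffle A B /=.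
  have D : perm_eq (x :: u ++ y :: v) (y :: (x :: u ++ v)).
    by rewrite -(cat1s y v) -cat_cons perm_catCA.
  by rewrite -(perm_cons y) (perm_trans C D).
exfalso.
have : z \in x :: u ++ y :: v by rewrite -(perm_mem H3) inE eqxx.
rewrite /= inE (eq_sym z) (negbTE Nxz) /= mem_cat inE (eq_sym z) (negbTE Nyz) /=.
move: H1 H2; rewrite /= (negbTE Nxz) (negbTE Nyz) => H1 H2.
case/andP: Hub => Hzb _.
case/orP => Hz.
- by move: Hzb; rewrite (mem_subseq H1) // inE Hz orbT.
- by move: Hzb; rewrite (mem_subseq H2) // inE Hz orbT.
Qed.

Lemma mem_shuf u v b : uniq (u ++ v) -> (b \in shuf u v) = is_shuffle u v b.
Proof.
move=> Hu; apply/idP/idP; last exact: shuf_complete.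
move=> Hb; rewrite /is_shuffle shuf_perm // andbT; exact: shuf_subseq.
Qed.

Lemma maj_rcons s x : (0 < size s)%N ->
  maj_prec (rcons s x) = (maj_prec s + prec x (last (0:int) s) * size s)%N.
Proof.
case: s => [//|z s] _.
rewrite /maj_prec size_rcons /=.
rewrite big_mkcond big_ord_recr /= [in RHS]big_mkcond /=.
congr addn.
  apply: eq_bigr => i _ /=.
  have Hi := ltn_ord i.
  by rewrite nth_rcons Hi -rcons_cons nth_rcons /= ltnS (ltnW Hi).
rewrite nth_rcons ltnn eqxx -rcons_cons nth_rcons /= ltnSn.
have -> : nth (0:int) (z :: s) (size s) = last z s by rewrite (nth_last (0:int) (z :: s)) /=.
by case: (prec x _); rewrite ?mul1n ?mul0n.
Qed.

Definition mr (w : seq int) := maj_prec (rev w).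

Lemma mr1 x : mr [:: x] = 0%N.
Proof. by rewrite /mr /maj_prec /= big_ord0. Qed.

Lemma mrS x y w : mr (x :: y :: w) = (mr (y :: w) + prec x y * (size w).+1)%N.
Proof.
rewrite /mr rev_cons maj_rcons; last by rewrite size_rev.
by rewrite size_rev /= rev_cons last_rcons.
Qed.

Definition SU x u y v := \sum_(c <- shuf u (y :: v)) tt ^+ mr (x :: c).

Lemma SU_nil x y v : SU x [::] y v = tt ^+ (mr (y :: v) + prec x y * (size v).+1).
Proof. by rewrite /SU /= big_seq1 mrS. Qed.

Lemma SU_cons x x' u y v :
  SU x (x' :: u) y v =
  tt ^+ (prec x x' * (size u + size v).+2) * SU x' u y v +
  tt ^+ (prec x y * (size u + size v).+2) * SU y v x' u.
Proof.
rewrite /SU shuf_cons big_cat !big_map !mulr_sumr; congr (_ + _).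
  apply: eq_big_seq => c Hc.
  rewrite mrS exprD mulrC; congr (_ * _); congr (_ ^+ (_ * _)).
  by rewrite (perm_size (shuf_perm Hc)) size_cat /=; lia.
rewrite -(perm_big _ (shuf_sym (x' :: u) v)).
apply: eq_big_seq => c Hc.
rewrite mrS exprD mulrC; congr (_ * _); congr (_ ^+ (_ * _)).
by rewrite (perm_size (shuf_perm Hc)) size_cat /=; lia.
Qed.

Lemma ex2 (a b c d : nat) (X Y : {poly rat}) : a = c -> b = d ->
  tt ^+ a * X + tt ^+ b * Y = tt ^+ c * X + tt ^+ d * Y.
Proof. by move=> -> ->. Qed.

Lemma gb_S N K : gb tt N.+1 K.+1 = gb tt N K + tt ^+ K.+1 * gb tt N K.+1.
Proof. by []. Qed.

Ltac fin2 := rewrite ?mulrDr ?mulrA -?exprD; rewrite [LHS]addrC; apply: ex2; lia.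
Ltac fin := rewrite ?mulrDr ?mulrA -?exprD;
  first [ apply: ex2; lia | rewrite [LHS]addrC; apply: ex2; lia ].

Ltac gen := match goal with |- context [gb tt ?a ?b] => move: (gb tt a b) => ? ; gen | _ => idtac end.
Ltac finP P1 P2 := first [ rewrite P1; gen; fin | rewrite P2; gen; fin ].

Definition Q x u y v :=
  (prec x y -> SU x u y v = tt ^+ (mr (x :: u) + mr (y :: v) + (size v).+1)
                 * gb tt (size u + size v).+1 (size v).+1) /\
  (prec y x -> SU x u y v = tt ^+ (mr (x :: u) + mr (y :: v))
                 * gb tt (size u + size v).+1 (size v).+1).

Lemma Q_nil x y v : x != y -> Q x [::] y v.
Proof.
move=> Hxy; rewrite /Q SU_nil mr1 add0n gb_nn mulr1; split => H.
  by rewrite H mul1n.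
by rewrite (negbTE (prec_asym H)) mul0n addn0 mulr1.
Qed.

Lemma core k : forall x u y v, (size u + size v)%N = k ->
  uniq (x :: u ++ y :: v) -> Q x u y v.
Proof.
elim: k => [|k IH] x [|x' u] y v.
- move=> _ /= /andP [H _]; apply: Q_nil.
  by apply: contra H => /eqP ->; rewrite ?mem_cat inE eqxx ?orbT.
- by [].
- move=> _ /= /andP [H _]; apply: Q_nil.
  by apply: contra H => /eqP ->; rewrite ?mem_cat inE eqxx ?orbT.
move=> /= [Hk] Hu.
have Hu1 : uniq (x' :: u ++ y :: v) by case/andP: Hu.
have Hu2 : uniq (y :: v ++ x' :: u).
  have P : perm_eq ((y :: v) ++ (x' :: u)) ((x' :: u) ++ (y :: v)) by rewrite perm_catC.
  by rewrite -cat_cons (perm_uniq P).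
have Nxy : x != y.
  by case/andP: Hu => H _; apply: contra H => /eqP ->; rewrite inE mem_cat inE eqxx !orbT.
have Nx'y : x' != y.
  by case/andP: Hu1 => H _; apply: contra H => /eqP ->; rewrite mem_cat inE eqxx !orbT.
have Nxx' : x != x'.
  by case/andP: Hu => H _; apply: contra H => /eqP ->; rewrite inE eqxx.
have [IH1a IH1b] := IH x' u y v Hk Hu1.
have [IH2a IH2b] := IH y v x' u (etrans (addnC _ _) Hk) Hu2.
have E0 : gb tt (size v + size u).+1 (size u).+1 = gb tt (size u + size v).+1 (size v).
  rewrite addnC gb_sym; last by lia.
  by congr gb; lia.
rewrite E0 in IH2a IH2b.
rewrite /Q SU_cons mrS.
change (size (x' :: u)) with (size u).+1.
rewrite addSn.
have P1 := gb_S (size u + size v).+1 (size v).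
have P2 := @gb_pascal2 (size u + size v).+1 (size v) ltac:(lia).
have E3 : ((size u + size v).+1 - size v = (size u).+1)%N by lia.
rewrite E3 in P2.
set A := mr (x' :: u) in IH1a IH1b IH2a IH2b *.
set B := mr (y :: v) in IH1a IH1b IH2a IH2b *.
set su := size u in IH1a IH1b IH2a IH2b P1 P2 *.
set sv := size v in IH1a IH1b IH2a IH2b P1 P2 *.
split => Hxy.
- rewrite Hxy mul1n.
  case/orP: (prec_total Nx'y) => Hx'y.
  + rewrite (IH1a Hx'y) (IH2b Hx'y).
    case: (prec x x'); rewrite ?mul1n ?mul0n; finP P1 P2.
  + rewrite (IH1b Hx'y) (IH2a Hx'y).
    rewrite (prec_trans Hxy Hx'y) mul1n; finP P1 P2.
- rewrite (negbTE (prec_asym Hxy)) mul0n.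
  case/orP: (prec_total Nx'y) => Hx'y.
  + rewrite (IH1a Hx'y) (IH2b Hx'y).
    have Hd : prec x' x := prec_trans Hx'y Hxy.
    rewrite (negbTE (prec_asym Hd)) mul0n; finP P1 P2.
  + rewrite (IH1b Hx'y) (IH2a Hx'y).
    case: (prec x x'); rewrite ?mul1n ?mul0n; finP P1 P2.
Qed.

Lemma is_shuffle_rev s p a :
  is_shuffle (rev s) (rev p) (rev a) = is_shuffle s p a.
Proof.
rewrite /is_shuffle !subseq_rev -rev_cat perm_rev perm_sym perm_rev perm_sym.
by rewrite perm_sym perm_catC perm_sym.
Qed.

Lemma neg_perm {s1 s2 : seq int} : perm_eq s1 s2 -> neg s1 = neg s2.
Proof. by move/permP => H; rewrite /neg H. Qed.

Lemma main_sum (sigma pi : seq int) x u y v :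
  uniq (sigma ++ pi) -> rev sigma = x :: u -> rev pi = y :: v ->
  \sum_(alpha <- permutations (sigma ++ pi)
          | is_shuffle sigma pi alpha && (last (0:int) alpha == last (0:int) sigma))
      'X^(fmaj alpha)
  = 'X^(neg sigma + neg pi) * SU x u y v.
Proof.
move=> Hu Hs Hp.
have Hur : uniq (rev sigma ++ rev pi).
  have P : perm_eq (pi ++ sigma) (sigma ++ pi) by rewrite perm_catC.
  by rewrite -rev_cat rev_uniq (perm_uniq P).
have Lx : last 0 sigma = x.
  by rewrite -(revK sigma) Hs rev_cons last_rcons.
set L := [seq rev b | b <- shuf (rev sigma) (rev pi)].
have HP : perm_eq
   [seq a <- permutations (sigma ++ pi) | is_shuffle sigma pi a && (last 0 a == last 0 sigma)]
   [seq a <- L | last 0 a == last 0 sigma].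
  apply: uniq_perm.
  - by rewrite filter_uniq // permutations_uniq.
  - rewrite filter_uniq // map_inj_uniq; last exact: (can_inj revK).
    exact: shuf_uniq.
  move=> a; rewrite !mem_filter mem_permutations.
  have -> : (a \in L) = is_shuffle sigma pi a.
    by rewrite -{1}(revK a) (mem_map (can_inj revK)) mem_shuf // is_shuffle_rev.
  rewrite andbC; case E: (is_shuffle sigma pi a); rewrite ?andbF //.
  by case/and3P: E => _ _ ->; rewrite andbT.
rewrite -big_filter (perm_big _ HP) big_filter /L big_map Hs Hp shuf_cons big_cat /=.
rewrite !big_map.
rewrite [X in _ + X = _]big1; last first.
  move=> c; rewrite rev_cons last_rcons Lx => /eqP Eyx.
  exfalso; move: Hur; rewrite Hs Hp /= Eyx mem_cat inE eqxx orbT; by [].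
rewrite addr0 /SU mulr_sumr.
under eq_bigl => j do rewrite rev_cons last_rcons Lx eqxx.
apply: eq_big_seq => c Hc.
rewrite /fmaj exprD mulrC exprM -/tt; congr (_ * _).
have P1 : perm_eq (rev (x :: c)) (rev sigma ++ rev pi).
  rewrite perm_rev Hs Hp /= perm_cons; exact: shuf_perm Hc.
rewrite (neg_perm P1) /neg count_cat.
by rewrite !count_rev.
Qed.

Theorem lemma5p7 (A B : seq nat) (m n : nat) (sigma pi : seq int) :
  uniq A -> uniq B -> all (fun a => 0 < a)%N A -> all (fun b => 0 < b)%N B ->
  ~~ has (fun a => a \in B) A ->
  size A = m -> (1 <= m)%N -> size B = n -> (1 <= n)%N ->
  signed_perm A sigma -> signed_perm B pi ->
  prec (last (0:int) sigma) (last (0:int) pi) ->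
  \sum_(alpha <- permutations (sigma ++ pi)
          | is_shuffle sigma pi alpha && (last (0:int) alpha == last (0:int) sigma))
      'X^(fmaj alpha)
  = 'X^(fmaj sigma + fmaj pi + 2 * n) * qbinom (n + m - 1) n ('X ^+ 2).
Proof.
move=> UA UB _ _ HAB SA Hm SB Hn [_ PA] [_ PB] Hprec.
have Ssig : size sigma = m by rewrite -SA -(perm_size PA) size_map.
have Spi : size pi = n by rewrite -SB -(perm_size PB) size_map.
have Hu : uniq (sigma ++ pi).
  apply: (@map_uniq _ _ absz); rewrite map_cat.
  rewrite (perm_uniq (perm_cat PA PB)) cat_uniq UA UB /= andbT.
  by rewrite has_sym.
case Es: (rev sigma) => [|x u].
  by move: (f_equal size Es); rewrite size_rev Ssig /=; lia.
case Ep: (rev pi) => [|y v].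
  by move: (f_equal size Ep); rewrite size_rev Spi /=; lia.
rewrite (@main_sum sigma pi x u y v Hu Es Ep).
have Lx : last 0 sigma = x by rewrite -(revK sigma) Es rev_cons last_rcons.
have Ly : last 0 pi = y by rewrite -(revK pi) Ep rev_cons last_rcons.
rewrite Lx Ly in Hprec.
have Hur : uniq (x :: u ++ y :: v).
  have P : perm_eq (rev pi ++ rev sigma) (rev sigma ++ rev pi) by rewrite perm_catC.
  by rewrite -cat_cons -Es -Ep -(perm_uniq P) -rev_cat rev_uniq.
have [Q1 _] := @core _ x u y v erefl Hur.
rewrite (Q1 Hprec).
have Su : size u = m.-1 by move: (f_equal size Es); rewrite size_rev Ssig /=; lia.
have Sv : size v = n.-1 by move: (f_equal size Ep); rewrite size_rev Spi /=; lia.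
rewrite -/tt qbinom_gb; last by lia.
have -> : (n + m - 1 = (size u + size v).+1)%N by lia.
have -> : n = (size v).+1 by lia.
have -> : mr (x :: u) = maj_prec sigma by rewrite /mr -Es revK.
have -> : mr (y :: v) = maj_prec pi by rewrite /mr -Ep revK.
rewrite /fmaj /tt mulrA -exprM -exprD; congr (_ * _); congr (_ ^+ _).
lia.
Qed.
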